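(* Let ${\bf A}=(a(i,j))$ be a real $n\times n$ matrix with no zero row, and suppose the associated matrix ${\bf A}_{\rm sde}$ has $1$ as a simple eigenvalue and all other eigenvalues in the open unit complex disk. Let ${\bf a}_{\rm sde}\in\mathbb{R}^{2n}$ be the vector with ${\bf a}_{\rm sde}^T{\bf A}_{\rm sde}={\bf a}_{\rm sde}^T$ and ${\bf a}_{\rm sde}^T{\bf 1}_{2n}=1$, let ${\bf w}=(w_1,\dots,w_n,w_1,\dots,w_n)^T$ and $\tilde w={\bf a}_{\rm sde}^T{\bf w}$. Then $$0<\min_{1\le i\le n}w_i\le\tilde w\le\max_{1\le i\le n}w_i.$$
   Context: $t_+=\max(t,0)$; $w_i=\big(\sum_{j=1}^n|a(i,j)|\big)^{-1}$; $\tilde a(i,j)=w_ia(i,j)$; $\tilde{\bf A}_+=\big((\tilde a(i,j))_+\big)$, $\tilde{\bf A}_-=\big((-\tilde a(i,j))_+\big)$; ${\bf A}_{\rm sde}=\begin{pmatrix}\tilde{\bf A}_+&\tilde{\bf A}_-\\ \tilde{\bf A}_+&\tilde{\bf A}_-\end{pmatrix}$; ${\bf 1}_{2n}$ is the all-ones vector. *)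

(* Defs.v *)
From HB Require Import structures.
From mathcomp Require Import all_boot all_order all_algebra.
From mathcomp Require Import complex.
Set Implicit Arguments. Unset Strict Implicit. Unset Printing Implicit Defensive.
Import Order.TTheory GRing.Theory Num.Theory.
Local Open Scope ring_scope.

Section SDE.
Variables (R : rcfType) (n : nat) (A : 'M[R]_n).

Definition wgt (i : 'I_n) : R := (\sum_(j < n) `|A i j|)^-1.
Definition Atil : 'M[R]_n := \matrix_(i, j) (wgt i * A i j).
Definition Atil_pos : 'M[R]_n := \matrix_(i, j) Num.max (Atil i j) 0.
Definition Atil_neg : 'M[R]_n := \matrix_(i, j) Num.max (- Atil i j) 0.
Definition A_sde : 'M[R]_(n + n) := block_mx Atil_pos Atil_neg Atil_pos Atil_neg.
Definition wvec : 'cV[R]_(n + n) :=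
  col_mx (\col_i wgt i) (\col_i wgt i).
End SDE.

Definition cplx_char_poly (R : rcfType) (m : nat) (M : 'M[R]_m) : {poly R[i]} :=
  char_poly (map_mx (fun x : R => (x%:C)%C) M).

Definition seqmin (R : realDomainType) (s : seq R) : R :=
  \big[Num.min/head 0 s]_(x <- s) x.
Definition seqmax (R : realDomainType) (s : seq R) : R :=
  \big[Num.max/head 0 s]_(x <- s) x.

(* Main.v *)
Require Import Defs.
From HB Require Import structures.
From mathcomp Require Import all_boot all_order all_algebra.
From mathcomp Require Import complex.
From mathcomp Require Import lra.
Import Order.TTheory GRing.Theory Num.Theory.
Local Open Scope ring_scope.
Lemma maxpn (R : realDomainType) (t : R) : Num.max t 0 + Num.max (-t) 0 = `|t|.
Proof.
rewrite /Num.max; case: (lerP 0 t) => h3.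
  rewrite ger0_norm //; case: (ltrP t 0) => h1; case: (ltrP (-t) 0) => h2; lra.
rewrite ltr0_norm //; case: (ltrP t 0) => h1; case: (ltrP (-t) 0) => h2; lra.
Qed.

Lemma maxge0 (R : realDomainType) (t : R) : 0 <= Num.max t 0.
Proof. rewrite /Num.max; case: (ltrP t 0) => h1; lra. Qed.

Lemma bigmin_le (R : realDomainType) (s : seq R) idx x :
  x \in s -> \big[Num.min/idx]_(y <- s) y <= x.
Proof.
elim: s => // y s IH; rewrite inE big_cons => /orP[/eqP->|/IH h].
  by rewrite ge_min lexx.
by rewrite ge_min h orbT.
Qed.

Lemma le_bigmax (R : realDomainType) (s : seq R) idx x :
  x \in s -> x <= \big[Num.max/idx]_(y <- s) y.
Proof.
elim: s => // y s IH; rewrite inE big_cons => /orP[/eqP->|/IH h].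
  by rewrite le_max lexx.
by rewrite le_max h orbT.
Qed.

Lemma abs_fix (R : realDomainType) N (P : 'M[R]_N) (a : 'rV_N) :
  (forall i j, 0 <= P i j) -> (forall i, \sum_j P i j = 1) -> a *m P = a ->
  map_mx Num.norm a *m P = map_mx Num.norm a.
Proof.
move=> P0 P1 aP; set c := map_mx Num.norm a.
have le : forall j, c 0 j <= (c *m P) 0 j.
  move=> j; rewrite [c 0 j]mxE -{1}aP !mxE.
  apply: le_trans (ler_norm_sum _ _ _) _.
  by apply: ler_sum => i _; rewrite normrM (ger0_norm (P0 _ _)) mxE.
have sumeq : \sum_j ((c *m P) 0 j - c 0 j) = 0.
  rewrite sumrB.
  have -> : \sum_j (c *m P) 0 j = \sum_j c 0 j.
    under eq_bigr do rewrite mxE.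
    rewrite exchange_big /=; apply: eq_bigr => i _.
    by rewrite -mulr_sumr P1 mulr1.
  by rewrite subrr.
apply/matrixP => i j; rewrite ord1.
apply/eqP; rewrite -subr_eq0; apply/eqP.
move/psumr_eq0P: sumeq; apply => // l _; rewrite subr_ge0; exact: le.
Qed.

Lemma wgt_gt0 (R : rcfType) n (A : 'M[R]_n)
  (hrow : forall i : 'I_n, exists j : 'I_n, A i j != 0) i : 0 < wgt A i.
Proof.
rewrite /wgt invr_gt0; have [j hj] := hrow i.
rewrite (bigD1 j) //=; apply: ltr_wpDr; last by rewrite normr_gt0.
by apply: sumr_ge0 => l _; exact: normr_ge0.
Qed.

Arguments wgt_gt0 {R n} A hrow i.
Lemma Asde_ge0 (R : rcfType) n (A : 'M[R]_n) i j : 0 <= A_sde A i j.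
Proof.
rewrite /A_sde.
case: (split_ordP i) => i' ->; case: (split_ordP j) => j' ->;
  rewrite ?block_mxEul ?block_mxEur ?block_mxEdl ?block_mxEdr mxE; exact: maxge0.
Qed.

Lemma Asde_sum (R : rcfType) n (A : 'M[R]_n)
  (hrow : forall i : 'I_n, exists j : 'I_n, A i j != 0) i :
  \sum_j A_sde A i j = 1.
Proof.
have key : forall i' : 'I_n, \sum_j (Atil_pos A i' j + Atil_neg A i' j) = 1.
  move=> i'; under eq_bigr => j _ do rewrite [Atil_pos _ _ _]mxE [Atil_neg _ _ _]mxE maxpn /Atil mxE normrM.
  rewrite -mulr_sumr ger0_norm; last exact: (ltW (wgt_gt0 _ hrow i')).
  rewrite /wgt mulVf //; apply: lt0r_neq0.
  have := wgt_gt0 _ hrow i'; by rewrite /wgt invr_gt0.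
rewrite big_split_ord /= -big_split /=.
case: (split_ordP i) => i' ->; rewrite -(key i'); apply: eq_bigr => j _;
  by rewrite /A_sde ?block_mxEul ?block_mxEur ?block_mxEdl ?block_mxEdr.
Qed.

Lemma wvec_in (R : rcfType) n (A : 'M[R]_n) j :
  exists i, wvec A j 0 = wgt A i.
Proof.
rewrite /wvec; case: (split_ordP j) => j' ->; exists j';
  by rewrite ?col_mxEu ?col_mxEd mxE.
Qed.
Lemma pidE (F : fieldType) k N (X : 'M[F]_N) (i : 'I_N) (ik : (i < k)%N) j :
  (pid_mx k *m X) (Ordinal ik) j = X i j.
Proof.
rewrite mxE (bigD1 i) //= big1 ?addr0.
  by rewrite mxE /= eqxx ik mul1r.
move=> l /negbTE nl; rewrite mxE /=.
case: eqP => [h|_]; last by rewrite mul0r.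
by case/eqP: nl; apply: val_inj.
Qed.

Arguments pidE {F k N} X {i} ik j.
Lemma fix_dvd_char (F : fieldType) k N (P : 'M[F]_N) (V : 'M[F]_(k, N)) :
  row_free V -> V *m P = V -> ('X - 1) ^+ k %| char_poly P.
Proof.
move=> rV VP.
have kN : (k <= N)%N by rewrite -(eqP rV) rank_leq_col.
set U := row_ebase V.
set L := col_ebase V.
have E : L *m pid_mx k *m U = V by move: (mulmx_ebase V); rewrite (eqP rV).
have hW : (pid_mx k : 'M_(k, N)) *m U *m P = pid_mx k *m U.
  have H : invmx L *m (V *m P) = invmx L *m V by rewrite VP.
  by move: H; rewrite -E !mulmxA mulVmx ?col_ebase_unit // !mul1mx.
have hU : forall (i : 'I_N) j, (i < k)%N -> (U *m P) i j = U i j.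
  move=> i j ik; by rewrite -(pidE (U *m P) ik) -(pidE U ik) -hW mulmxA.
set cpm := char_poly_mx P.
set Uf := map_mx polyC U.
pose d : 'rV[{poly F}]_N := \row_i (if (i < k)%N then 'X - 1 else 1).
pose B : 'M[{poly F}]_N := \matrix_(i, j) if (i < k)%N then Uf i j else (Uf *m cpm) i j.
have EB : Uf *m cpm = diag_mx d *m B.
  apply/matrixP => i j; rewrite mul_diag_mx mxE [d 0 i]mxE [B i j]mxE.
  case: ifP => ik; last by rewrite mul1r.
  rewrite /cpm /char_poly_mx mulmxBr mul_mx_scalar -map_mxM.
  have hh : \sum_j0 U i j0 * P j0 j = U i j by rewrite -hU // mxE.
  rewrite !mxE hh /=.
  by rewrite mulrBl mul1r.
have := congr1 determinant EB.
rewrite !det_mulmx det_diag /Uf det_map_mx.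
have -> : \prod_(i < N) d 0 i = ('X - 1) ^+ k.
  rewrite (eq_bigr (fun i : 'I_N => if (i < k)%N then 'X - 1 else 1)); last by move=> i _; rewrite mxE.
  rewrite -(big_mkord xpredT (fun i => if (i < k)%N then 'X - 1 else 1)).
  rewrite (@big_cat_nat _ _ _ k 0 N) //=.
  rewrite (big_nat_cond) (eq_bigr (fun=> 'X - 1)); last by move=> i /andP[/andP[_ ->]].
  rewrite -big_nat_cond prodr_const_nat subn0.
  rewrite big_nat_cond big1 ?mulr1 //.
  by move=> i /andP[/andP[]]; rewrite leqNgt => /negbTE ->.
rewrite mul_polyC => EE.
have dU : \det U != 0 by rewrite -unitfE -unitmxE row_ebase_unit.
rewrite -(dvdpZr _ _ dU) EE.
exact: dvdp_mulr.
Qed.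

Theorem lemma1 (R : rcfType) (n : nat) (A : 'M[R]_n)
  (hrow : forall i : 'I_n, exists j : 'I_n, A i j != 0)
  (hsimple : mup 1 (cplx_char_poly (A_sde A)) = 1%N)
  (hother : forall z : R[i], root (cplx_char_poly (A_sde A)) z -> z != 1 -> `|z| < 1)
  (a : 'rV[R]_(n + n))
  (ha_left : a *m A_sde A = a)
  (ha_sum : \sum_(j < n + n) a 0 j = 1) :
  let wt := (a *m wvec A) 0 0 in
  let ws := [seq wgt A i | i <- enum 'I_n] in
  0 < seqmin ws /\ seqmin ws <= wt /\ wt <= seqmax ws.
Proof.
move=> wt ws.
set P := A_sde A.
have a_ge0 : forall j, 0 <= a 0 j.
  move=> j1; case: (pickP (fun j => a 0 j < 0)) => [j0 aj0|hall]; last by rewrite leNgt hall.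
  exfalso.
  have [l al] : exists l, 0 < a 0 l.
    case: (pickP (fun l => 0 < a 0 l)) => [l al|hl]; first by exists l.
    have : \sum_(j < n + n) a 0 j <= 0.
      by apply: sumr_le0 => j _; rewrite leNgt hl.
    by rewrite ha_sum; lra.
  set c := map_mx Num.norm a.
  have cP : c *m P = c.
    apply: abs_fix => //; [exact: Asde_ge0 | exact: Asde_sum].
  set V := col_mx a c.
  have VP : V *m P = V by rewrite /V mul_col_mx ha_left cP.
  have rV : row_free V.
    apply: inj_row_free => v vV.
    have E : forall j, (v *m V) 0 j = v 0 (lshift 1 0) * a 0 j + v 0 (rshift 1 0) * `|a 0 j|.
      move=> j; rewrite mxE big_split_ord /= !big_ord1 /V col_mxEu col_mxEd /c [map_mx _ _ _ _]mxE.
      by [].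
    have e1 := E j0; have e2 := E l; rewrite vV mxE in e1; rewrite vV mxE in e2.
    rewrite ltr0_norm // in e1; rewrite gtr0_norm // in e2.
    have h0 : v 0 (lshift 1 0) = 0 /\ v 0 (rshift 1 0) = 0.
      set x := v 0 (lshift 1 0) in e1 e2 *; set y := v 0 (rshift 1 0) in e1 e2 *.
      have ex : (x - y) * a 0 j0 = 0 by rewrite mulrBl -mulrN; lra.
      have ey : (x + y) * a 0 l = 0 by rewrite mulrDl; lra.
      move/eqP: ex; rewrite mulf_eq0 (lt_eqF aj0) orbF subr_eq0 => /eqP exy.
      move/eqP: ey; rewrite mulf_eq0 (gt_eqF al) orbF exy => /eqP yy.
      split; lra.
    apply/matrixP => i k; rewrite ord1 [RHS]mxE.
    by case: (split_ordP k) => k' ->; rewrite ord1; case: h0.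
  have dv := @fix_dvd_char _ _ _ _ _ rV VP.
  have : (2 <= mup 1 (cplx_char_poly P))%N.
    rewrite mup_geq; last by rewrite monic_neq0 // char_poly_monic.
    rewrite /cplx_char_poly.
    have -> : map_mx (fun x : R => (x%:C)%C) P = map_mx (real_complex R) P by [].
    rewrite -map_char_poly.
    have -> : ('X - (1 : R[i])%:P) ^+ 2 = map_poly (real_complex R) (('X - 1) ^+ (1 + 1)).
      by rewrite rmorphXn rmorphB /= map_polyX -polyC1 map_polyC rmorph1.
    by rewrite dvdp_map.
  by rewrite hsimple.
have [i0 _] : exists i0 : 'I_n, true.
  case: (pickP (@predT 'I_(n + n))) => [j _|h].
    by case: (split_ordP j) => j' _; exists j'.
  have : \sum_(j < n + n) a 0 j = 0 by apply: big1 => j _; have := h j.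
  by rewrite ha_sum => /eqP; rewrite oner_eq0.
have ws_gt0 : forall x, x \in ws -> 0 < x.
  by move=> x /mapP [i _ ->]; exact: wgt_gt0.
have i0ws : wgt A i0 \in ws by rewrite map_f // mem_enum.
have wt_eq : wt = \sum_j a 0 j * wvec A j 0 by rewrite /wt mxE.
split.
  rewrite /seqmin big_seq; apply: (big_ind (fun x => 0 < x)).
  - move: ws_gt0 i0ws; clearbody ws; case: ws => // x s H _; apply: H; exact: mem_head.
  - by move=> x y hx hy; rewrite lt_min hx hy.
  - by move=> x; apply: ws_gt0.
have hw : forall j, seqmin ws <= wvec A j 0 <= seqmax ws.
  move=> j; have [i ->] := @wvec_in _ _ A j.
  have iws : wgt A i \in ws by rewrite map_f // mem_enum.
  by rewrite bigmin_le // le_bigmax.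
rewrite wt_eq; split.
  rewrite -[seqmin ws]mul1r -ha_sum mulr_suml; apply: ler_sum => j _.
  by rewrite ler_wpM2l //; case/andP: (hw j).
rewrite -[seqmax ws]mul1r -ha_sum mulr_suml; apply: ler_sum => j _.
by rewrite ler_wpM2l //; case/andP: (hw j).
Qed.
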